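(* Let $q$ be a prime power and let $\mathcal{F}$ be a flag on $\mathbb{F}_{q^n}$ whose best friend is the subfield $\mathbb{F}_{q^m}$. Assume that the cyclic orbit flag code $\mathrm{Orb}(\mathcal{F})$ is an optimum distance flag code. Then the type vector of $\mathcal{F}$ is either $(m)$, $(n-m)$ or $(m,n-m)$. In each of these cases $|\mathrm{Orb}(\mathcal{F})|=\frac{q^n-1}{q^m-1}$, which is the largest possible cardinality of an optimum distance flag code on $\mathbb{F}_{q^n}$ of that type.
   Context: A flag of type $(t_1,\ldots,t_r)$ ($r\ge1$) on $\mathbb{F}_{q^n}$ is a sequence $(\mathcal{F}_1,\ldots,\mathcal{F}_r)$ of $\mathbb{F}_q$-subspaces with $\{0\}\subsetneq\mathcal{F}_1\subsetneq\cdots\subsetneq\mathcal{F}_r\subsetneq\mathbb{F}_{q^n}$ and $\dim_{\mathbb{F}_q}\mathcal{F}_i=t_i$. For $\gamma\in\mathbb{F}_{q^n}^*$, $\mathcal{F}\gamma=(\mathcal{F}_1\gamma,\ldots,\mathcal{F}_r\gamma)$ with $\mathcal{U}\gamma=\{u\gamma:u\in\mathcal{U}\}$, and $\mathrm{Orb}(\mathcal{F})=\{\mathcal{F}\gamma:\gamma\in\mathbb{F}_{q^n}^*\}$. A subfield $\mathbb{F}_{q^m}$ is a friend of $\mathcal{F}$ if every $\mathcal{F}_i$ is an $\mathbb{F}_{q^m}$-vector space; the best friend is the largest friend. Subspace distance $d_S(\mathcal{U},\mathcal{V})=\dim(\mathcal{U}+\mathcal{V})-\dim(\mathcal{U}\cap\mathcal{V})$;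 flag distance $d_f(\mathcal{F},\mathcal{F}')=\sum_i d_S(\mathcal{F}_i,\mathcal{F}'_i)$; the minimum distance of a set of flags is the minimum over distinct pairs ($0$ for a single flag). A set of flags of type $(t_1,\ldots,t_r)$ on $\mathbb{F}_{q^n}$ is an optimum distance flag code if its minimum distance equals $2\left(\sum_{t_i\le\lfloor n/2\rfloor}t_i+\sum_{t_i>\lfloor n/2\rfloor}(n-t_i)\right)$. *)

(* Defs.v *)
From HB Require Import structures.
From mathcomp Require Import all_boot all_order all_algebra all_field.
Set Implicit Arguments. Unset Strict Implicit. Unset Printing Implicit Defensive.
Import GRing.Theory.
Local Open Scope ring_scope.

(* F = F_q (any finite field, q = #|F|), L = F_{q^n} a finite field extension
   of F, n = \dim {:L}. Subspaces are F-subspaces of L. A flag is a list of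
   F-subspaces [:: F_1; ...; F_r]. *)
Section Flags.
Variables (F : finFieldType) (L : fieldExtType F).

Definition flag := seq {vspace L}.

Definition ltv (U V : {vspace L}) : bool := (U <= V)%VS && (U != V).

Definition is_flag (f : flag) : bool :=
  (0 < size f)%N && path ltv 0%VS (rcons f fullv).

Definition flag_type (f : flag) : seq nat := [seq \dim U | U <- f].

Definition is_flag_of_type (ty : seq nat) (f : flag) : bool :=
  is_flag f && (flag_type f == ty).

Definition vs_mul (U : {vspace L}) (g : L) : {vspace L} := (U * <[g]>)%VS.

Definition flag_mul (f : flag) (g : L) : flag := [seq vs_mul U g | U <- f].

Definition orb (f : flag) : seq flag :=
  undup [seq flag_mul f (g : L) | g : finvect_type L in [pred x : finvect_type L | x != 0]].

Definition dS (U V : {vspace L}) : nat := (\dim (U + V) - \dim (U :&: V))%N.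

Definition flag_dist (f g : flag) : nat := \sum_(p <- zip f g) dS p.1 p.2.

(* minimum distance of a set (list) of flags; 0 if no distinct pair *)
Definition min_dist (C : seq flag) : nat :=
  let ds := [seq flag_dist p.1 p.2 | p <- [seq (x, y) | x <- C, y <- C] & p.1 != p.2] in
  if ds is d :: ds' then foldr minn d ds' else 0%N.

Definition opt_bound (n : nat) (ty : seq nat) : nat :=
  (2 * \sum_(t <- ty) (if (t <= n./2)%N then t else n - t))%N.

Definition optimum_distance (ty : seq nat) (C : seq flag) : Prop :=
  min_dist C = opt_bound (\dim (fullv : {vspace L})) ty.

Definition friend (K : {subfield L}) (f : flag) : bool :=
  all (fun U => (K * U <= U)%VS) f.

Definition best_friend (K : {subfield L}) (f : flag) : Prop :=
  friend K f /\ forall K' : {subfield L}, friend K' f -> (K' <= K)%VS.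

End Flags.

(* Main.v *)
Require Import Defs.
From HB Require Import structures.
From mathcomp Require Import all_boot all_order all_algebra all_field.
From mathcomp Require Import zify.
Set Implicit Arguments. Unset Strict Implicit. Unset Printing Implicit Defensive.
Import GRing.Theory.
Local Open Scope ring_scope.

Section Aux.
Variables (F : finFieldType) (L : fieldExtType F).
Implicit Types (U V W H : {vspace L}) (f : flag L).

Lemma mem_vs_mul U g x : g != 0 -> (x \in vs_mul U g) = (x / g \in U).
Proof.
move=> g0; apply/memv_cosetP/idP => [[u Uu ->]|xU].
  by rewrite mulfK.
by exists (x / g) => //; rewrite divfK.
Qed.

Lemma dim_vs_mul U g : g != 0 -> \dim (vs_mul U g) = \dim U.
Proof. exact: dim_cosetv. Qed.

Lemma vs_mulM U a b : vs_mul (vs_mul U a) b = vs_mul U (a * b).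
Proof. by rewrite /vs_mul -prodvA prodv_line. Qed.

Lemma vs_mul1 U : vs_mul U 1 = U.
Proof. by rewrite /vs_mul prodv1. Qed.

Lemma flag_mulM f a b : flag_mul (flag_mul f a) b = flag_mul f (a * b).
Proof. by rewrite /flag_mul -map_comp; apply: eq_map => U /=; rewrite vs_mulM. Qed.

Lemma flag_mul1 f : flag_mul f 1 = f.
Proof. by rewrite /flag_mul (eq_map (@vs_mul1)) map_id. Qed.


Lemma stab_K (K : {subfield L}) U e : e \in K -> (K * U <= U)%VS -> e != 0 ->
  vs_mul U e = U.
Proof.
move=> eK KU e0; apply/eqP; rewrite eqEdim dim_cosetv // leqnn andbT.
apply/prodvP => u x Uu /vlineP[a ->].
by rewrite mulrC (subvP KU) // memv_mul // memvZ.
Qed.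

Lemma stab_adjoin (K : {subfield L}) U e : (K * U <= U)%VS -> vs_mul U e = U ->
  (<<K; e>> * U <= U)%VS.
Proof.
move=> KU eU.
have eUU w : w \in U -> e * w \in U.
  by move=> Uw; rewrite -eU /vs_mul mulrC memv_mul // memv_line.
have eiU i w : w \in U -> e ^+ i * w \in U.
  by elim: i => [|i IH] Uw; rewrite ?expr0 ?mul1r // exprS -mulrA eUU ?IH.
apply/prodvP => x u /Fadjoin_polyP[p /polyOverP pK ->] Uu.
rewrite horner_coef mulr_suml; apply: memv_suml => i _.
by rewrite -mulrA (subvP KU) // memv_mul // eiU.
Qed.

Lemma flag_mul_fix f e : flag_mul f e = f -> forall U, U \in f -> vs_mul U e = U.
Proof.
move=> fe U Uf; have := congr1 (fun s => nth 0%VS s (index U f)) fe.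
by rewrite /flag_mul (nth_map 0%VS) ?index_mem // nth_index.
Qed.

Lemma stab_flag (K : {subfield L}) f e : best_friend K f -> flag_mul f e = f -> e \in K.
Proof.
case=> fK bK fe.
have : friend <<K; e>>%AS f.
  apply/allP => U Uf; apply: stab_adjoin; first exact: (allP fK).
  exact: flag_mul_fix fe U Uf.
by move/bK/subvP; apply; apply: memv_adjoin.
Qed.

Lemma flag_mul_K (K : {subfield L}) f e : friend K f -> e \in K -> e != 0 ->
  flag_mul f e = f.
Proof.
move=> fK eK e0; rewrite /flag_mul -[RHS]map_id; apply/eq_in_map => U Uf.
exact: stab_K eK (allP fK U Uf) e0.
Qed.

Lemma flag_mul_eq (K : {subfield L}) f x g : best_friend K f -> x != 0 -> g != 0 ->
  (flag_mul f x == flag_mul f g) = (x / g \in K).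
Proof.
move=> bf x0 g0; apply/eqP/idP => [E|xgK].
  apply: (stab_flag bf); rewrite -flag_mulM E flag_mulM mulfV // flag_mul1 //.
rewrite -{1}(divfK g0 x) -flag_mulM (flag_mul_K bf.1 xgK) //.
by rewrite mulf_neq0 ?invr_eq0.
Qed.

Definition bnd (n t : nat) : nat := if (t <= n./2)%N then t else (n - t)%N.

Lemma dimv_full_le U : (\dim U <= \dim (fullv : {vspace L}))%N.
Proof. exact/dimvS/subvf. Qed.

Lemma dS_same U V : \dim U = \dim V ->
  dS U V = (2 * (\dim U - \dim (U :&: V)))%N /\
  (\dim (U + V) + \dim (U :&: V) = 2 * \dim U)%N.
Proof.
move=> dUV; have := dimv_sum_cap U V; have := dimvS (capvSl U V).
rewrite /dS -dUV; lia.
Qed.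

Lemma dS_le U V : \dim U = \dim V -> (dS U V <= 2 * bnd (\dim (fullv : {vspace L})) (\dim U))%N.
Proof.
move=> dUV; have [-> h] := dS_same dUV; have := dimv_full_le (U + V).
rewrite /bnd; case: ifP; lia.
Qed.

Lemma dS_small U V : \dim U = \dim V -> (\dim U <= (\dim (fullv : {vspace L}))./2)%N ->
  dS U V = (2 * \dim U)%N -> (U :&: V = 0)%VS.
Proof.
move=> dUV _; have [-> h] := dS_same dUV => e.
apply/eqP; rewrite -dimv_eq0; have := dimvS (capvSl U V); lia.
Qed.

Lemma dS_big U V : \dim U = \dim V -> ((\dim (fullv : {vspace L}))./2 < \dim U)%N ->
  dS U V = (2 * (\dim (fullv : {vspace L}) - \dim U))%N -> (U + V = fullv)%VS.
Proof.
move=> dUV lt; have [-> h] := dS_same dUV => e.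
apply/eqP; rewrite eqEdim subvf /=; have := dimv_full_le U; have := dimvS (capvSl U V).
move: lt; rewrite ltn_half_double -mul2n; lia.
Qed.

Local Notation nn := (\dim (fullv : {vspace L})).

Lemma fd_cons U V x y : flag_dist (U :: x) (V :: y) = (dS U V + flag_dist x y)%N.
Proof. by rewrite /flag_dist /= big_cons. Qed.

Lemma fd_nil_l (y : flag L) : flag_dist [::] y = 0%N.
Proof. by case: y => [|? ?]; rewrite /flag_dist /= big_nil. Qed.

Lemma fd_le (x y : flag L) : flag_type x = flag_type y ->
  (flag_dist x y <= 2 * \sum_(U <- x) bnd nn (\dim U))%N.
Proof.
elim: x y => [|U x IH] [|V y] //=; first by rewrite fd_nil_l.
case=> e1 e2; rewrite fd_cons big_cons mulnDr leq_add //; first exact: dS_le.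
exact: IH.
Qed.

Lemma fd_eq (x y : flag L) : flag_type x = flag_type y ->
  (2 * \sum_(U <- x) bnd nn (\dim U) <= flag_dist x y)%N ->
  forall p, p \in zip x y -> dS p.1 p.2 = (2 * bnd nn (\dim p.1))%N.
Proof.
elim: x y => [|U x IH] [|V y] //= [e1 e2]; rewrite fd_cons big_cons mulnDr => h p.
have h1 := dS_le e1; have h2 := fd_le e2.
rewrite in_cons => /orP[/eqP -> /=|pxy]; first lia.
apply: IH pxy => //; lia.
Qed.

Lemma opt_boundE (x : flag L) : opt_bound nn (flag_type x) = (2 * \sum_(U <- x) bnd nn (\dim U))%N.
Proof. by rewrite /opt_bound /flag_type big_map. Qed.

Lemma foldr_minn_le d s e : e \in d :: s -> (foldr minn d s <= e)%N.
Proof.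
elim: s => [|a s IH] /=; first by rewrite inE => /eqP ->.
move=> h; rewrite geq_min; move: h; rewrite !inE => /or3P[/eqP E|/eqP E|es].
- by apply/orP; right; apply: IH; rewrite E mem_head.
- by rewrite E leqnn.
- by apply/orP; right; apply: IH; rewrite inE es orbT.
Qed.

Lemma min_dist_le (C : seq (flag L)) x y : x \in C -> y \in C -> x != y ->
  (min_dist C <= flag_dist x y)%N.
Proof.
move=> xC yC xy; rewrite /min_dist.
set ds := map _ _.
have : flag_dist x y \in ds.
  apply: (map_f (fun p : flag L * flag L => flag_dist p.1 p.2) (x := (x, y))).
  by rewrite mem_filter /= xy; apply: allpairs_f.
by case: ds => [|d s] //; apply: foldr_minn_le.
Qed.

Lemma opt_pair (C : seq (flag L)) x y : x \in C -> y \in C -> x != y ->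
  flag_type x = flag_type y -> optimum_distance (flag_type x) C ->
  forall p, p \in zip x y -> dS p.1 p.2 = (2 * bnd nn (\dim p.1))%N.
Proof.
move=> xC yC xy e opt; apply: fd_eq => //.
by rewrite -opt_boundE -opt; apply: min_dist_le.
Qed.

Definition Sint H (s : seq L) : {vspace L} := (\bigcap_(b <- s) vs_mul H b^-1)%VS.

Lemma mem_Sint H s g : (forall b, b \in s -> b != 0) ->
  (g \in Sint H s) = all (fun b => b * g \in H) s.
Proof.
rewrite /Sint; elim: s => [|b s IH] nz /=; first by rewrite big_nil memvf.
rewrite big_cons memv_cap IH; last by move=> c cs; apply: nz; rewrite inE cs orbT.
by rewrite mem_vs_mul ?invr_eq0 ?nz ?mem_head // invrK mulrC.
Qed.

Lemma dim_Sint H s : (forall b, b \in s -> b != 0) -> (nn <= (\dim H).+1)%N ->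
  (nn - size s <= \dim (Sint H s))%N.
Proof.
rewrite /Sint => + dH; elim: s => [|b s IH] nz /=; first by rewrite big_nil subn0.
have := IH (fun c cs => nz c (@mem_behead _ (b :: s) c cs)).
rewrite big_cons; set R := (\bigcap_(_ <- _) _)%VS.
have := dimv_sum_cap (vs_mul H b^-1) R; have := dimv_full_le (vs_mul H b^-1 + R).
rewrite dim_vs_mul ?invr_eq0 ?nz ?mem_head //; set k := size s; lia.
Qed.

Lemma not_subvP V U : ~~ (V <= U)%VS -> exists2 x, x \in V & x \notin U.
Proof.
move=> nVU.
have : ~~ all (fun x => x \in U) (vbasis V).
  apply: contra nVU => /allP h; rewrite -(span_basis (vbasisP V)).
  by apply/span_subvP => x /h.
by case/allPn => x xb xU; exists x => //; apply: vbasis_mem.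
Qed.

Lemma dim_add_line V x : x \notin V -> \dim (V + <[x]>) = (\dim V).+1.
Proof.
move=> xV; rewrite dimv_disjoint_sum ?dim_vline; last first.
  apply/eqP; rewrite -subv0; apply/subvP => y /memv_capP[yV /vlineP[a ya]].
  rewrite memv0; have [a0|a0] := eqVneq a 0; first by rewrite ya a0 scale0r.
  have xV2 : x \in V by rewrite -[x](scalerK a0) memvZ // -ya.
  by case/negP: xV.
have -> : (x != 0) by apply: contraNneq xV => ->; rewrite mem0v.
by rewrite addn1.
Qed.

Lemma ext_dim U k : (\dim U <= k <= nn)%N -> exists V, (U <= V)%VS /\ \dim V = k.
Proof.
elim: k => [|k IH] /andP[h1 h2].
  by exists U; split => //; lia.
have [e|lt] := eqVneq (\dim U) k.+1; first by exists U.
have [V [UV dV]] : exists V, (U <= V)%VS /\ \dim V = k by apply: IH; lia.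
have : ~~ (fullv <= V)%VS by apply/negP => /dimvS; lia.
case/not_subvP => x _ xV.
exists (V + <[x]>)%VS; split; first exact: subv_trans UV (addvSl _ _).
by rewrite dim_add_line // dV.
Qed.

Lemma Sint_sub H U g : g \in Sint H (vbasis U) -> (vs_mul U g <= H)%VS.
Proof.
have nz : forall b, b \in (vbasis U : seq L) -> b != 0.
  by move=> b; apply: basis_not0 (vbasisP U).
rewrite mem_Sint // => /allP h.
apply/prodvP => u _ Uu /vlineP[a ->].
rewrite (coord_vbasis Uu) mulr_suml; apply: memv_suml => i _.
rewrite -scalerAl -scalerAr; do 2 apply: memvZ.
by apply: h; apply: mem_nth; rewrite size_tuple.
Qed.

Lemma compA (K : {subfield L}) U : (0 < \dim U)%N -> (K * U <= U)%VS ->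
  (forall g, g != 0 -> g \notin K -> (U :&: vs_mul U g = 0)%VS) -> \dim U = \dim K.
Proof.
move=> dU KU h; set u0 := vpick U.
have u00 : u0 != 0 by rewrite vpick0 -dimv_eq0 -lt0n.
have u0U : u0 \in U by apply: memv_pick.
have s1 : (vs_mul K u0 <= U)%VS.
  by apply: subv_trans KU; apply: prodvSr; rewrite -memvE.
have s2 : (U <= vs_mul K u0)%VS.
  apply/subvP => u Uu; rewrite mem_vs_mul //.
  have [->|u0'] := eqVneq u 0; first by rewrite mul0r mem0v.
  apply/negPn/negP => nK.
  have g0 : u / u0 != 0 by rewrite mulf_neq0 ?invr_eq0.
  have := h _ g0 nK => /eqP; rewrite -subv0 => /subvP /(_ u).
  rewrite memv_cap Uu mem_vs_mul // invf_div mulrC divfK // u0U memv0 => /(_ isT).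
  by rewrite (negPf u0').
by rewrite -(dim_vs_mul K u00); apply/eqP; rewrite eqn_leq !dimvS.
Qed.

Lemma compB (K : {subfield L}) U : (\dim U < nn)%N -> (K * U <= U)%VS ->
  (forall g, g != 0 -> g \notin K -> (U + vs_mul U g = fullv)%VS) ->
  \dim U = (nn - \dim K)%N.
Proof.
move=> dU KU h.
have le1 : (\dim U + \dim K <= nn)%N.
  have : ~~ (fullv <= U)%VS by apply/negP => /dimvS; lia.
  case/not_subvP => x _ xU.
  have x0 : x != 0 by apply: contraNneq xU => ->; rewrite mem0v.
  have cap0 : (vs_mul K x :&: U = 0)%VS.
    apply/eqP; rewrite -subv0; apply/subvP => y /memv_capP[].
    rewrite mem_vs_mul // memv0 => yK yU.
    apply/negPn/negP => y0; case/negP: xU.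
    have -> : x = (y / x)^-1 * y by rewrite invf_div divfK.
    by apply: (subvP KU); apply: memv_mul; rewrite ?memvV.
  have := dimv_full_le (vs_mul K x + U).
  by rewrite dimv_disjoint_sum // dim_vs_mul // addnC.
have le2 : (nn <= \dim U + \dim K)%N.
  rewrite leqNgt; apply/negP => lt.
  have [H [UH dH]] : exists H, (U <= H)%VS /\ \dim H = nn.-1.
    by apply: ext_dim; lia.
  have nz : forall b, b \in (vbasis U : seq L) -> b != 0.
    by move=> b; apply: basis_not0 (vbasisP U).
  have dS' := @dim_Sint H (vbasis U) nz.
  rewrite size_tuple dH in dS'.
  have dS2 := dS' ltac:(lia).
  have : ~~ (Sint H (vbasis U) <= K)%VS.
    apply/negP => /dimvS => hh. move: hh dS2 lt. set a := \dim (Sint _ _). set b := \dim (asval K). lia.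
  case/not_subvP => g gS gK.
  have g0 : g != 0 by apply: contraNneq gK => ->; rewrite mem0v.
  have := h g g0 gK => /(congr1 (fun V => (V <= H)%VS)).
  rewrite subv_add UH Sint_sub //= => /esym/dimvS; rewrite dH; lia.
lia.
Qed.

Lemma sumn_const (T : Type) (t : seq T) c : sumn [seq c | _ <- t] = (size t * c)%N.
Proof. by elim: t => //= _ t ->; rewrite mulSn. Qed.

Lemma size_undup_const (T : eqType) (s : seq T) c :
  (forall y, y \in s -> count_mem y s = c) -> size s = (size (undup s) * c)%N.
Proof.
move=> h; rewrite -(perm_size (perm_count_undup s)) size_flatten /shape -map_comp.
rewrite (_ : map _ _ = [seq c | _ <- undup s]) ?sumn_const //.
by apply/eq_in_map => y; rewrite mem_undup /= size_nseq => /h.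
Qed.

Lemma count_enum_card (T : finType) (A : {pred T}) (p : pred T) :
  count p (enum A) = #|[pred x in A | p x]|.
Proof.
rewrite cardE /enum_mem -!size_filter.
by rewrite -!filter_predI; congr size; apply: eq_filter => x; rewrite /= andbC.
Qed.

Local Notation fT := (finvect_type L).

Lemma card_L : #|fT| = (#|F| ^ nn)%N.
Proof. by rewrite -(@card_vspacef F fT (Vector.class L)) card_vspace. Qed.

Lemma card_vs_nz (V : {vspace L}) : #|[pred x : fT | x \in V & x != 0]| = (#|F| ^ \dim V).-1.
Proof.
rewrite -(@card_vspace F fT (Vector.class L) V) [in RHS](cardD1 0) mem0v add1n /=.
by apply: eq_card => x; rewrite !inE andbC.
Qed.

Lemma mem_orb f g : g != 0 -> flag_mul f g \in orb f.
Proof.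
move=> g0; rewrite /orb mem_undup.
by apply: (image_f (fun g : fT => flag_mul f g)); rewrite inE.
Qed.

Lemma flag_type_mul f g : g != 0 -> flag_type (flag_mul f g) = flag_type f.
Proof.
by move=> g0; rewrite /flag_type /flag_mul -map_comp; apply: eq_map => U /=; rewrite dim_vs_mul.
Qed.

Lemma mem_zip_map (h : {vspace L} -> {vspace L}) s U : U \in s -> (U, h U) \in zip s (map h s).
Proof.
elim: s => // V s IH; rewrite inE => /orP[/eqP ->|Us] /=; first by rewrite mem_head.
by rewrite inE IH ?orbT.
Qed.

Lemma size_orb (K : {subfield L}) f : best_friend K f ->
  size (orb f) = ((#|F| ^ nn).-1 %/ (#|F| ^ \dim K).-1)%N.
Proof.
move=> bf; set s := [seq flag_mul f g | g : fT in [pred x : fT | x != 0]].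
have szs : size s = (#|F| ^ nn).-1.
  by rewrite size_image -card_L -(cardC1 (0 : fT)); apply: eq_card => x; rewrite !inE.
have cnt : forall y, y \in s -> count_mem y s = (#|F| ^ \dim K).-1.
  move=> y /imageP[g]; rewrite inE => g0 ->.
  rewrite count_map count_enum_card -(dim_vs_mul K g0) -(card_vs_nz (vs_mul K g)).
  apply: eq_card => x; rewrite !inE /=.
  have [->|x0] := eqVneq x 0; first by rewrite andbF.
  by rewrite andbT (flag_mul_eq bf x0 g0) mem_vs_mul.
have pos : (0 < (#|F| ^ \dim K).-1)%N.
  have := card_finNzRing_gt1 F; have := adim_gt0 K.
  case: (\dim K) => // k _ q1; rewrite -subn1 subn_gt0.
  by rewrite -[1%N](expn0 #|F|) ltn_exp2l.
by rewrite /orb -szs (size_undup_const cnt) mulnK.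
Qed.

Lemma mem_bigcup_seq (T : Type) (s : seq T) (A : T -> {set fT}) z :
  (z \in \bigcup_(x <- s) A x) = has (fun x => z \in A x) s.
Proof.
elim: s => [|a s IH]; first by rewrite big_nil inE.
by rewrite big_cons in_setU IH.
Qed.

Lemma spread_bound (T : eqType) (C : seq T) (W : T -> {vspace L}) k :
  uniq C -> (forall x, x \in C -> (k <= \dim (W x))%N) ->
  (forall x y, x \in C -> y \in C -> x != y -> (W x :&: W y = 0)%VS) ->
  (size C * (#|F| ^ k).-1 <= (#|F| ^ nn).-1)%N.
Proof.
move=> uC dW dis.
pose A x := [set z : fT | (z \in W x) && (z != 0)].
have cA x : #|A x| = (#|F| ^ \dim (W x)).-1.
  by rewrite cardsE -card_vs_nz; apply: eq_card => z; rewrite !inE.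
have q1 := card_finNzRing_gt1 F.
have step : (size C * (#|F| ^ k).-1 <= #|\bigcup_(x <- C) A x|)%N.
  elim: C uC dW dis => [|a C IH] /=; first by rewrite mul0n.
  case/andP => aC uC dW dis.
  rewrite big_cons cardsU.
  have -> : A a :&: \bigcup_(x <- C) A x = set0.
    apply/setP => z; rewrite !inE mem_bigcup_seq.
    apply/negP => /andP[/andP[zW z0] /hasP[y yC]].
    rewrite inE => /andP[zWy _].
    have ay : a != y by apply: contraNneq aC => ->.
    have := dis a y (mem_head _ _) (@mem_behead _ (a :: C) y yC) ay => /eqP.
    rewrite -subv0 => /subvP /(_ z); rewrite memv_cap zW zWy memv0 => /(_ isT).
    by rewrite (negPf z0).
  rewrite cards0 subn0 mulSn leq_add //.
    rewrite cA; have := dW a (mem_head _ _) => h.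
    by rewrite -!subn1 leq_sub2r // leq_pexp2l // ltnW.
  apply: IH => // [x xC|x y xC yC]; first by apply: dW; rewrite inE xC orbT.
  by apply: dis; rewrite inE ?xC ?yC orbT.
apply: (leq_trans step).
rewrite -card_L -(cardC1 (0 : fT)); apply: subset_leq_card.
apply/subsetP => z; rewrite mem_bigcup_seq => /hasP[x _]; rewrite !inE.
by case/andP.
Qed.

Lemma ltv_trans : transitive (@ltv F L).
Proof.
move=> V U W /andP[sUV nUV] /andP[sVW nVW]; rewrite /ltv (subv_trans sUV sVW) /=.
apply: contra nUV => /eqP UW; subst W; rewrite eq_sym eqEdim sVW /=.
exact: dimvS.
Qed.

Lemma ltv_dim U V : ltv U V -> (\dim U < \dim V)%N.
Proof.
case/andP => sUV nUV.
by rewrite ltn_neqAle (dimv_leqif_eq sUV).2 nUV (dimvS sUV).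
Qed.

End Aux.

Theorem corollary4p23 (F : finFieldType) (L : fieldExtType F)
    (f : flag L) (K : {subfield L}) :
  is_flag f ->
  best_friend K f ->
  optimum_distance (flag_type f) (orb f) ->
  let n := \dim (fullv : {vspace L}) in
  let m := \dim K in
  let q := #|F| in
  [\/ flag_type f = [:: m], flag_type f = [:: (n - m)%N]
    | flag_type f = [:: m; (n - m)%N]] /\
  size (orb f) = ((q ^ n - 1) %/ (q ^ m - 1))%N /\
  (forall C : seq (flag L),
     uniq C -> all (is_flag_of_type (flag_type f)) C ->
     optimum_distance (flag_type f) C ->
     (size C <= (q ^ n - 1) %/ (q ^ m - 1))%N).
Proof.
move=> isf bf opt n m q; rewrite {}/n {}/m {}/q.
set n := \dim (fullv : {vspace L}); set m := \dim K; set q := #|F|.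
have fK := bf.1.
case/andP: isf => sz pth.
move: pth; rewrite (path_pairwise (@ltv_trans F L)) pairwise_cons all_rcons pairwise_rcons.
case/andP => /andP[_ all0] /andP[allf pwf].
have dpos U : U \in f -> (0 < \dim U)%N.
  by move=> Uf; have := ltv_dim (allP all0 U Uf); rewrite dimv0.
have dlt U : U \in f -> (\dim U < n)%N.
  by move=> Uf; apply: ltv_dim (allP allf U Uf).
have f_in : f \in orb f by have := mem_orb f (oner_neq0 L); rewrite flag_mul1.
have P U : U \in f -> ((\dim U <= n./2)%N && (\dim U == m)) || ((n./2 < \dim U)%N && (\dim U == n - m)%N).
  move=> Uf.
  have key g : g != 0 -> g \notin K -> dS U (vs_mul U g) = (2 * bnd n (\dim U))%N.
    move=> g0 gK.
    have ne : f != flag_mul f g.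
      by apply: contraNneq gK => E; apply: (stab_flag bf); rewrite -E.
    exact: (opt_pair f_in (mem_orb f g0) ne (esym (flag_type_mul f g0)) opt
              (mem_zip_map (fun V => vs_mul V g) Uf)).
  have [h|h] := leqP (\dim U) n./2.
    rewrite (compA (dpos U Uf) (allP fK U Uf)) ?eqxx //.
    move=> g g0 gK; apply: dS_small (h) _; first by rewrite dim_vs_mul.
    by rewrite key // /bnd h.
  rewrite (compB (dlt U Uf) (allP fK U Uf)) ?eqxx ?orbT //.
  move=> g g0 gK; apply: dS_big (h) _; first by rewrite dim_vs_mul.
  by rewrite key // /bnd leqNgt h.
have cls_gen (s : flag L) : (0 < size s)%N ->
    (forall U, U \in s -> ((\dim U <= n./2)%N && (\dim U == m)) || ((n./2 < \dim U)%N && (\dim U == n - m)%N)) ->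
    pairwise (@ltv F L) s ->
    ((flag_type s = [:: m]) /\ (m <= n./2)%N) \/
    ((flag_type s = [:: (n - m)%N]) /\ (n./2 < n - m)%N) \/
    ((flag_type s = [:: m; (n - m)%N]) /\ (m <= n./2)%N).
  rewrite /flag_type.
  case: s => [|U [|V [|W f']]] //= _ P' pwf'.
  - have := P' U (mem_head _ _); case/orP => /andP[h /eqP e];
      [left | right; left]; rewrite e; split => //; move=> *; lia.
  - move: pwf' => /andP[/andP[/ltv_dim uv _] _].
    have := P' U (mem_head _ _); have := P' V ltac:(by rewrite !inE eqxx orbT).
    case/orP => /andP[h1 /eqP e1]; case/orP => /andP[h2 /eqP e2]; try lia.
    by right; right; rewrite e1 e2; split => //; rewrite -e2.
  - move: pwf' => /and4P[/and3P[/ltv_dim uv /ltv_dim uw _] /andP[/ltv_dim vw _] _ _].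
    have := P' U (mem_head _ _); have := P' V ltac:(by rewrite !inE eqxx orbT).
    have := P' W ltac:(by rewrite !inE eqxx !orbT).
    by case/orP => /andP[h1 /eqP e1]; case/orP => /andP[h2 /eqP e2];
      case/orP => /andP[h3 /eqP e3]; lia.
have cls := cls_gen f sz P pwf.
have q1 : (1 < q)%N := card_finNzRing_gt1 F.
have m1 : (0 < m)%N := adim_gt0 K.
have mn : (m <= n)%N by apply: dimvS; apply: subvf.
have pos : (0 < (q ^ m).-1)%N.
  rewrite -subn1 subn_gt0 -[1%N](expn0 q) ltn_exp2l //.
split.
  by case: cls => [[-> _]|[[-> _]|[-> _]]]; [constructor 1|constructor 2|constructor 3].
split; first by rewrite !subn1; apply: size_orb.
move=> C uC allC optC.
have tyC x : x \in C -> flag_type x = flag_type f.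
  by move=> xC; have /andP[_ /eqP] := allP allC x xC.
have ne : flag_type f != [::] by case: cls => [[-> _]|[[-> _]|[-> _]]].
have dhead x : x \in C -> \dim (head 0%VS x) = head 0%N (flag_type f).
  move=> xC; have := tyC x xC; case: x xC => [|a x'] xC /=.
    by move=> E; rewrite -E eqxx in ne.
  by move=> <-.
have pairC x y : x \in C -> y \in C -> x != y ->
    dS (head 0%VS x) (head 0%VS y) = (2 * bnd n (\dim (head 0%VS x)))%N.
  move=> xC yC xy.
  have mz : (head 0%VS x, head 0%VS y) \in zip x y.
    have := tyC x xC; have := tyC y yC.
    case: x {xC xy} => [|a x'] ; first by move=> _ E; rewrite -E eqxx in ne.
    case: y {yC} => [|b y'] ; first by move=> E; rewrite -E eqxx in ne.
    by move=> _ _ /=; rewrite mem_head.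
  have tx := tyC x xC; have ty := tyC y yC.
  have optx : optimum_distance (flag_type x) C by rewrite tx.
  exact: (opt_pair xC yC xy (etrans tx (esym ty)) optx mz).
rewrite !subn1 leq_divRL //.
case: cls => [[ft mle]|[[ft mgt]|[ft mle]]].
- apply: (spread_bound (W := fun x => head 0%VS x) uC) => [x xC|x y xC yC xy].
    by rewrite dhead // ft.
  apply: dS_small; first by rewrite !dhead.
    by rewrite dhead // ft.
  by rewrite pairC // /bnd dhead // ft mle.
- have [H [_ dH]] : exists H, ((0 : {vspace L}) <= H)%VS /\ \dim H = n.-1.
    by apply: ext_dim; rewrite dimv0 /=; lia.
  have nz x : forall b, b \in (vbasis (head 0%VS x) : seq L) -> b != 0.
    by move=> b; apply: basis_not0 (vbasisP _).
  apply: (spread_bound (W := fun x => Sint H (vbasis (head 0%VS x))) uC) => [x xC|x y xC yC xy].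
    have := @dim_Sint F L H _ (nz x); rewrite dH => h.
    have st := size_tuple (vbasis (head 0%VS x)).
    have dh : \dim (head 0%VS x) = (n - m)%N by rewrite dhead // ft.
    have h2 := h ltac:(by rewrite prednK // (leq_trans m1 mn)).
    move: h2 st dh; rewrite /n; move: mn; rewrite /n.
    set z := size _; set D := \dim (Sint _ _); set d := \dim (head _ _); set N := \dim fullv.
    lia.
  have dxy : \dim (head 0%VS x) = \dim (head 0%VS y) by rewrite !dhead.
  have hx : \dim (head 0%VS x) = (n - m)%N by rewrite dhead // ft.
  have sum : (head 0%VS x + head 0%VS y = fullv)%VS.
    apply: dS_big dxy _ _; first by rewrite hx.
    by rewrite pairC // /bnd hx leqNgt mgt.
  apply/eqP; rewrite -subv0; apply/subvP => g /memv_capP[gx gy]; rewrite memv0.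
  apply/negPn/negP => g0.
  have s1 := Sint_sub gx; have s2 := Sint_sub gy.
  have : (vs_mul fullv g <= H)%VS.
    by rewrite -sum /vs_mul prodvDl subv_add s1 s2.
  move/dimvS; rewrite dim_vs_mul // dH.
  have n0 : (0 < n)%N := leq_trans m1 mn.
  move: n0; rewrite /n; case: (\dim fullv) => // k _ /=.
  by rewrite ltnn.
- apply: (spread_bound (W := fun x => head 0%VS x) uC) => [x xC|x y xC yC xy].
    by rewrite dhead // ft.
  apply: dS_small; first by rewrite !dhead.
    by rewrite dhead // ft.
  by rewrite pairC // /bnd dhead // ft mle.
Qed.
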